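(* For nonnegative integers $i$ and $k$, $$\binom{i+k}{2k}_q=\binom{i}{k}_q+\sum_{r=1}^kq^{k+r}\binom{i+r-1}{k+r}_q.$$
   Context: For nonnegative integers $n$, $[n]!_q=\prod_{j=1}^n\frac{1-q^j}{1-q}$ (with $[0]!_q=1$), and for integers $0\le k\le n$, $\binom{n}{k}_q=\frac{[n]!_q}{[k]!_q[n-k]!_q}$ (Gaussian polynomial); set $\binom{n}{k}_q=0$ if $k<0$ or $k>n$. *)

(* Defs.v *)
From mathcomp Require Import all_boot all_order all_algebra.
From mathcomp Require Import fraction.
Set Implicit Arguments. Unset Strict Implicit. Unset Printing Implicit Defensive.
Import GRing.Theory.
Local Open Scope ring_scope.

Notation RF := {fraction {poly int}}.

Definition qX : RF := tofrac 'X.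

Definition qint (j : nat) : RF := (1 - qX ^+ j) / (1 - qX).

Definition qfact (n : nat) : RF := \prod_(1 <= j < n.+1) qint j.

Definition qbinom (n k : nat) : RF :=
  if (k <= n)%N then qfact n / (qfact k * qfact (n - k)) else 0.

(* Main.v *)
Require Import Defs.
From mathcomp Require Import all_boot all_order all_algebra.
From mathcomp Require Import fraction.
From mathcomp Require Import ring.
Import GRing.Theory.
Local Open Scope ring_scope.

Lemma alg (F : fieldType) (D fm fd u a b A : F) :
  fm != 0 -> fd != 0 -> u != 0 -> 1 - a != 0 -> 1 - b != 0 ->
  D * ((1 - A) / u) * ((1 - a * b) / u) / (fm * ((1 - a) / u) * (fd * ((1 - b) / u))) =
  D * ((1 - A) / u) / (fm * (fd * ((1 - b) / u))) +
  a * (D * ((1 - A) / u) / (fm * ((1 - a) / u) * fd)).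
Proof. move=> h1 h2 h3 h4 h5. field. by rewrite h1 h2 h3 h4 h5. Qed.

Lemma qXn_neq1 j : (0 < j)%N -> 1 - qX ^+ j != 0.
Proof.
move=> j0; rewrite subr_eq0 /qX -tofracXn -tofrac1 eq_sym tofrac_eq.
apply/negP=> /eqP/(congr1 (size : {poly int} -> nat)).
by rewrite size_polyXn size_poly1; case: j j0.
Qed.

Lemma qint_neq0 j : (0 < j)%N -> qint j != 0.
Proof.
move=> j0; rewrite /qint mulf_neq0 ?invr_eq0 ?qXn_neq1 //.
by have := qXn_neq1 1 isT; rewrite expr1.
Qed.

Lemma qfact_neq0 n : qfact n != 0.
Proof.
rewrite /qfact big_nat; apply: (big_ind (fun x : RF => x != 0)).
- exact: oner_neq0.
- by move=> x y; apply: mulf_neq0.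
- by move=> j /andP[h _]; exact: qint_neq0.
Qed.

Lemma qfactS n : qfact n.+1 = qfact n * qint n.+1.
Proof. by rewrite /qfact big_nat_recr. Qed.

Lemma pascal n m :
  qbinom n.+1 m.+1 = qbinom n m + qX ^+ m.+1 * qbinom n m.+1.
Proof.
rewrite /qbinom ltnS.
case: (ltngtP m n) => [lt|gt|eq]; last first.
- have q0 : qfact 0 = 1 by rewrite /qfact big_geq.
  by rewrite eq !subnn q0 !mulr1 !divff ?qfact_neq0 // mulr0 addr0.
- by rewrite mulr0 addr0.
rewrite subSS.
have [d ->] : exists d, n = (m + d.+1)%N by exists (n - m.+1)%N; rewrite addnS -addSn subnKC.
have e1 : (m + d.+1 - m = d.+1)%N by rewrite addKn.
have e2 : (m + d.+1 - m.+1 = d)%N by rewrite addnS subSS addKn.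
rewrite e1 e2 addnS !qfactS.
have h1 := qfact_neq0 m; have h2 := qfact_neq0 d; have h3 := qfact_neq0 (m + d).
have h4 := qint_neq0 m.+1 (ltn0Sn m); have h5 := qint_neq0 d.+1 (ltn0Sn d).
have h6 : 1 - qX != 0 by have := qXn_neq1 1 isT; rewrite expr1.
have h7 := qXn_neq1 m.+1 (ltn0Sn m); have h8 := qXn_neq1 d.+1 (ltn0Sn d).
rewrite /qint.
rewrite /qint in h4 h5.
rewrite (_ : qX ^+ (m + d).+2 = qX ^+ m.+1 * qX ^+ d.+1); last first.
  by rewrite -exprD addSn addnS.
exact: (@alg _ (qfact (m + d)) (qfact m) (qfact d) (1 - qX) (qX ^+ m.+1) (qX ^+ d.+1) (qX ^+ (m + d).+1) h1 h2 h6 h7 h8).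
Qed.

Lemma gen a b k : qbinom (a + k) (b + k) =
  qbinom a b + \sum_(1 <= r < k.+1) qX ^+ (b + r) * qbinom (a + r - 1) (b + r).
Proof.
elim: k => [|k IH]; first by rewrite !addn0 big_geq // addr0.
rewrite big_nat_recr //= addrA -IH !addnS pascal.
by rewrite subn1.
Qed.

Theorem lemma6 (i k : nat) :
  qbinom (i + k) (2 * k) =
  qbinom i k + \sum_(1 <= r < k.+1) qX ^+ (k + r) * qbinom (i + r - 1) (k + r).
Proof. by rewrite mul2n -addnn gen. Qed.
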